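(* Let $\succcurlyeq$ be a preference relation on the set $\mathcal{B}$ of bets over a propositional language $\mathcal{L}$ satisfying Non-Triviality, Objective Expected Utility and Inclusion/Exclusion. Let $\mathcal{T}$ be a theory and let $\mathcal{S}\subseteq\mathcal{T}$ be the unique largest sub-theory such that $\succcurlyeq$ satisfies $\mathcal{S}$-Implication (i.e. $\succcurlyeq$ satisfies $\mathcal{S}$-Implication and fails $\mathcal{S}'$-Implication for every $\mathcal{S}\subsetneq\mathcal{S}'\subseteq\mathcal{T}$). Then $\mathcal{S}=\{\phi\in\mathcal{T}\mid b_\phi\succcurlyeq b_{\mathbf{T}}\}$.
   Context: Let $\mathbb{P}$ be a set of propositional variables containing distinguished $\mathbf{T}$, $\mathbf{F}$, and $\mathcal{L}$ the language generated by $\neg,\land,\lor$; $\phi\implies\psi$ means $\psi$ is deducible from $\phi$ in classical propositional logic. A theory is a set $\mathcal{T}\subseteq\mathcal{L}$ closed under logical implication with $\mathbf{F}\notin\mathcal{T}$. For a set $\mathcal{S}$ of statements, $\phi\overset{\mathcal{S}}{\implies}\psi$ means $\psi$ is deducible from $\phi$ together with the elements of $\mathcal{S}$. A bet is a finitely supported $b:\mathcal{L}\to[0,1]$ summing to $1$; $b_\phi$ is the point-mass bet on $\phi$; the set $\mathcal{B}$ of bets is a mixture space under pointwise mixtures, and $\{\alpha_1 b_{\phi_1},\dots,\alpha_k b_{\phi_k}\}$ denotes the bet assigning weight $\alpha_i$ to $\phi_i$ (weights on coinciding statements added). Non-Triviality: $b_{\mathbf{T}}\succcurlyeq b_\phi\succcurlyeq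 b_{\mathbf{F}}$ for all $\phi$ and $b_{\mathbf{T}}\succ b_{\mathbf{F}}$. Objective Expected Utility: $\succcurlyeq$ is complete, transitive, Archimedean and satisfies Independence. $\mathcal{S}$-Implication: $\phi\overset{\mathcal{S}}{\implies}\psi$ implies $b_\psi\succcurlyeq b_\phi$. Inclusion/Exclusion: for any $\phi_1,\dots,\phi_n\in\mathcal{L}$ and $\psi$ with $\phi_i\implies\psi$ for all $i$, letting $E$ and $O$ be the collections of nonempty subsets of $\{1,\dots,n\}$ of even and odd cardinality respectively, $\phi_I=\bigwedge_{i\in I}\phi_i$, and $m=\max\{|E|+1,|O|\}$, we have $\{\tfrac1m b_\psi,\ \tfrac1m b_{\phi_I}\ (I\in E),\ (1-\tfrac{|E|+1}{m})b_{\mathbf{F}}\}\succcurlyeq\{\tfrac1m b_{\phi_I}\ (I\in O),\ (1-\tfrac{|O|}{m})b_{\mathbf{F}}\}$. *)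

(* Defs.v *)
From mathcomp Require Import all_boot.
From Stdlib Require Import Reals ClassicalDescription.

Set Implicit Arguments.
Unset Strict Implicit.
Unset Printing Implicit Defensive.

Section Logic.
Variable P : Type.
Variables (vT vF : P).

Inductive form : Type :=
| Var of P
| Neg of form
| And of form & form
| Or of form & form.

Fixpoint eval (v : P -> bool) (f : form) : bool :=
  match f with
  | Var p => v p
  | Neg g => ~~ eval v g
  | And g h => eval v g && eval v h
  | Or g h => eval v g || eval v h
  end.

(* Classical valuations, with T read as true and F as false. *)
Definition admissible (v : P -> bool) : Prop := v vT = true /\ v vF = false.

(* Classical (finite-premise) consequence; by soundness/completeness this is
   deducibility in classical propositional logic. *)
Definition entails (G : list form) (psi : form) : Prop :=
  forall v, admissible v -> (forall g, List.In g G -> eval v g) -> eval v psi.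

Definition implies (phi psi : form) : Prop := entails (phi :: nil) psi.

(* phi ==>^S psi : psi deducible from phi together with elements of S
   (deductions use finitely many premises). *)
Definition S_implies (S : form -> Prop) (phi psi : form) : Prop :=
  exists G : list form, (forall g, List.In g G -> S g) /\ entails (phi :: G) psi.

Definition theory (Th : form -> Prop) : Prop :=
  (forall (G : list form) psi, (forall g, List.In g G -> Th g) -> entails G psi -> Th psi)
  /\ ~ Th (Var vF).

Definition bet := form -> R.

Definition list_sum (b : bet) (l : list form) : R :=
  List.fold_right (fun f acc => (b f + acc)%R) 0%R l.

Definition is_bet (b : bet) : Prop :=
  (forall f, (0 <= b f <= 1)%R) /\
  exists l : list form, List.NoDup l /\ (forall f, ~ List.In f l -> b f = 0%R)
                        /\ list_sum b l = 1%R.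

Definition pm (phi : form) : bet :=
  fun chi => if excluded_middle_informative (chi = phi) then 1%R else 0%R.

Definition mix (a : R) (p q : bet) : bet := fun chi => (a * p chi + (1 - a) * q chi)%R.

Definition strict (pref : bet -> bet -> Prop) (p q : bet) : Prop := pref p q /\ ~ pref q p.

Definition non_triviality (pref : bet -> bet -> Prop) : Prop :=
  (forall phi, pref (pm (Var vT)) (pm phi) /\ pref (pm phi) (pm (Var vF)))
  /\ strict pref (pm (Var vT)) (pm (Var vF)).

Definition objective_EU (pref : bet -> bet -> Prop) : Prop :=
  (forall p q, is_bet p -> is_bet q -> pref p q \/ pref q p) /\
  (forall p q r, is_bet p -> is_bet q -> is_bet r -> pref p q -> pref q r -> pref p r) /\
  (forall p q r, is_bet p -> is_bet q -> is_bet r ->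
     strict pref p q -> strict pref q r ->
     exists a b : R, (0 < a < 1)%R /\ (0 < b < 1)%R /\
       strict pref (mix a p r) q /\ strict pref q (mix b p r)) /\
  (forall p q r (a : R), is_bet p -> is_bet q -> is_bet r -> (0 < a <= 1)%R ->
     (pref p q <-> pref (mix a p r) (mix a q r))).

Definition satisfies_S_implication (pref : bet -> bet -> Prop) (S : form -> Prop) : Prop :=
  forall phi psi, S_implies S phi psi -> pref (pm psi) (pm phi).

Fixpoint conj_list (x : form) (l : list form) : form :=
  match l with
  | nil => x
  | cons y r => And x (conj_list y r)
  end.

(* phi_I = /\_{i in I} phi_i, conjuncts in increasing index order
   (only used for nonempty I; the value on the empty set is irrelevant) *)
Definition conjI (n : nat) (phi : 'I_n -> form) (I : {set 'I_n}) : form :=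
  match enum I with
  | nil => Var vT
  | cons i r => conj_list (phi i) (map phi r)
  end.

Definition evenI (n : nat) : {set {set 'I_n}} :=
  [set I : {set 'I_n} | (I != set0) && ~~ odd #|I|].
Definition oddI (n : nat) : {set {set 'I_n}} :=
  [set I : {set 'I_n} | odd #|I|].

Definition inclusion_exclusion (pref : bet -> bet -> Prop) : Prop :=
  forall (n : nat) (phi : 'I_n -> form) (psi : form),
    (forall i, implies (phi i) psi) ->
    let E := evenI n in
    let O := oddI n in
    let m := maxn (#|E| + 1) #|O| in
    pref
      (fun chi => (/ INR m * pm psi chi
                   + \big[Rplus/0%R]_(I in E) (/ INR m * pm (conjI phi I) chi)
                   + (1 - INR (#|E| + 1) / INR m) * pm (Var vF) chi)%R)
      (fun chi => (\big[Rplus/0%R]_(I in O) (/ INR m * pm (conjI phi I) chi)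
                   + (1 - INR #|O| / INR m) * pm (Var vF) chi)%R).

End Logic.

(* Main.v *)
Require Import Defs.
From mathcomp Require Import all_boot.
From Stdlib Require Import Reals.
From HB Require Import structures.
From Stdlib Require Import Lra Classical FunctionalExtensionality ClassicalDescription.

Lemma Rplus_assoc_ssr : associative Rplus. Proof. intros x y z; symmetry; apply Rplus_assoc. Qed.
HB.instance Definition _ := Monoid.isComLaw.Build R R0 Rplus Rplus_assoc_ssr Rplus_comm Rplus_0_l.

Section Aux.
Variable P : Type.
Variables vT vF : P.

Lemma pm_eq (f : form P) : pm f f = 1%R.
Proof. unfold pm; cbv beta; destruct (excluded_middle_informative (f = f)); simpl; congruence. Qed.

Lemma pm_neq (f g : form P) : g <> f -> pm f g = 0%R.
Proof. intro H; unfold pm; cbv beta; destruct (excluded_middle_informative (g = f)); simpl; congruence. Qed.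

Lemma pm_val (f g : form P) : pm f g = 1%R \/ pm f g = 0%R.
Proof. unfold pm; cbv beta; destruct (excluded_middle_informative (g = f)); simpl; auto. Qed.

Lemma is_bet_pm (f : form P) : is_bet (pm f).
Proof.
split.
- intro x; destruct (pm_val f x) as [-> | ->]; lra.
- exists (cons f nil); split; [constructor; [intros []|constructor]|split].
  + intros x Hx; apply pm_neq; intro; subst; apply Hx; left; reflexivity.
  + simpl; rewrite pm_eq; lra.
Qed.

Lemma is_bet_mix (a : R) (x y : form P) : (0 <= a <= 1)%R -> is_bet (mix a (pm x) (pm y)).
Proof.
intro Ha; split.
- intro z; unfold mix; destruct (pm_val x z) as [-> | ->];
    destruct (pm_val y z) as [-> | ->]; nra.
- destruct (excluded_middle_informative (x = y)) as [<- | Hne].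
  + exists (cons x nil); split; [constructor; [intros []|constructor]|split].
    * intros z Hz; unfold mix; rewrite pm_neq; [|intro; subst; apply Hz; left; reflexivity]; lra.
    * simpl; unfold mix; rewrite pm_eq; lra.
  + exists (cons x (cons y nil)); split.
    * constructor; [intros [H|[]]; apply Hne; auto|constructor; [intros []|constructor]].
    * split.
      -- intros z Hz; unfold mix.
         rewrite (pm_neq x z); [|intro; subst; apply Hz; left; reflexivity].
         rewrite (pm_neq y z); [|intro; subst; apply Hz; right; left; reflexivity]; lra.
      -- simpl; unfold mix; rewrite !pm_eq (pm_neq y x) ?(pm_neq x y); auto; lra.
Qed.

Set Implicit Arguments.
Lemma entails_cut (G H : list (form P)) x :
  (forall h, List.In h H -> entails vT vF G h) -> entails vT vF H x -> entails vT vF G x.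
Proof. intros Hh Hx v Hv HG; apply Hx; auto; intros h Hin; exact (Hh h Hin v Hv HG). Qed.

Lemma entails_mono (G G' : list (form P)) x :
  (forall g, List.In g G -> List.In g G') -> entails vT vF G x -> entails vT vF G' x.
Proof. intros Hs Hx v Hv HG; apply Hx; auto. Qed.

Lemma collect (S : form P -> Prop) (phi : form P) (H : list (form P)) :
  (forall h, List.In h H -> exists G, (forall g, List.In g G -> S g) /\ entails vT vF (phi :: G) h) ->
  exists G, (forall g, List.In g G -> S g) /\ forall h, List.In h H -> entails vT vF (phi :: G) h.
Proof.
induction H as [|h H IH]; intro Hh.
- exists nil; split; [intros g []|intros h []].
- destruct (Hh h (or_introl (erefl _))) as [G1 [HG1 E1]].
  destruct IH as [G2 [HG2 E2]]; [intros k Hk; apply Hh; right; auto|].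
  exists (G1 ++ G2); split.
  + intros g Hg; apply List.in_app_or in Hg; destruct Hg; auto.
  + intros k [<-|Hk].
    * eapply entails_mono; [|exact E1]; intros g [<-|Hg]; [left; auto|right; apply List.in_or_app; auto].
    * eapply entails_mono; [|exact (E2 k Hk)]; intros g [<-|Hg]; [left; auto|right; apply List.in_or_app; auto].
Qed.

End Aux.

Lemma card_le2 (I : {set 'I_2}) : #|I| <= 2.
Proof. by have := max_card (mem I); rewrite card_ord. Qed.

Lemma evenI2 : evenI 2 = [set setT].
Proof.
apply/setP => I; rewrite !inE -cards_eq0 eqEcard subsetT cardsT card_ord /=.
by move: (card_le2 I); case: #|I| => [|[|[|k]]].
Qed.

Definition o1 : 'I_2 := @Ordinal 2 1 erefl.

Lemma ord01 : ([set ord0] : {set 'I_2}) != [set o1].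
Proof.
apply/eqP => h; have := set11 (ord0 : 'I_2); rewrite h in_set1 => /eqP h2.
by have := congr1 val h2.
Qed.

Lemma oddI2 : oddI 2 = [set [set ord0]; [set o1]].
Proof.
apply/setP => I; rewrite !inE; apply/idP/idP.
- move: (card_le2 I); case E: #|I| => [|[|[|k]]] // _ _.
  move/eqP: E => /cards1P [x ->].
  case: x => [[|[|k]] Hk] //.
  + by apply/orP; left; apply/eqP; congr [set _]; apply/val_inj.
  + by apply/orP; right; apply/eqP; congr [set _]; apply/val_inj.
- by case/orP => /eqP ->; rewrite cards1.
Qed.

Lemma enumT2 : enum [set: 'I_2] = [:: ord0; o1].
Proof.
apply: (@inj_map _ _ val val_inj).
by rewrite enum_setT -enumT val_enum_ord.
Qed.

Set Implicit Arguments.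
Section Key.
Variable P : Type.
Variables vT vF : P.

Lemma key_ineq (pref : bet P -> bet P -> Prop) (chi phi : form P) :
  non_triviality vT vF pref -> objective_EU pref -> inclusion_exclusion vT vF pref ->
  pref (pm phi) (pm (Var vT)) -> pref (pm (And chi phi)) (pm chi).
Proof.
intros [HNT _] [_ [Htrans [_ Hind]]] HIE Hp.
pose phi2 := fun i : 'I_2 => if val i == 0 then chi else phi.
have Himp : forall i : 'I_2, Defs.implies vT vF (phi2 i) (Or chi phi).
  intros i v Hv Hall; have := Hall (phi2 i) (or_introl (erefl _)).
  rewrite /phi2; case: (val i == 0) => /= ->; [by []|by rewrite orbT].
have H := HIE 2 phi2 (Or chi phi) Himp.
cbv zeta in H.
have h2 : (1 - / 2 = / 2)%R by lra.
have hbet : forall x y : form P, is_bet (mix (/2) (pm x) (pm y)).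
  intros x y; apply is_bet_mix; lra.
match type of H with pref ?L ?R =>
  have eL : L = mix (/2) (pm (Or chi phi)) (pm (And chi phi));
  [|have eR : R = mix (/2) (pm chi) (pm phi)] end.
- apply functional_extensionality => z.
  rewrite evenI2 oddI2 cards1 cards2 ord01 big_set1 /conjI enumT2 /=.
  rewrite /phi2 /=; unfold mix; lra.
- apply functional_extensionality => z.
  rewrite evenI2 oddI2 cards1 cards2 ord01 big_setU1 ?big_set1 /conjI ?enum_set1; try by rewrite in_set1 ord01.
  rewrite /phi2 /=; unfold mix; lra.
- rewrite eL eR in H.
  have HpO : pref (pm phi) (pm (Or chi phi)).
    apply Htrans with (pm (Var vT)); try apply is_bet_pm; auto; apply HNT.
  have H2 := proj1 (Hind (pm phi) (pm (Or chi phi)) (pm (And chi phi)) (/2)%R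
      (is_bet_pm P _) (is_bet_pm P _) (is_bet_pm P _) ltac:(lra)) HpO.
  have eC : mix (/2) (pm phi) (pm (And chi phi)) = mix (/2) (pm (And chi phi)) (pm phi).
    apply functional_extensionality => z; unfold mix; lra.
  rewrite eC in H2.
  apply (proj2 (Hind (pm (And chi phi)) (pm chi) (pm phi) (/2)%R
      (is_bet_pm P _) (is_bet_pm P _) (is_bet_pm P _) ltac:(lra))).
  eapply Htrans; [apply hbet|apply hbet|apply hbet|exact H2|exact H].
Qed.
End Key.

Unset Implicit Arguments.
Theorem proposition6 (P : Type) (vT vF : P) (pref : bet P -> bet P -> Prop)
  (Th S : form P -> Prop) :
  non_triviality vT vF pref ->
  objective_EU pref ->
  inclusion_exclusion vT vF pref ->
  theory vT vF Th ->
  theory vT vF S ->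
  (forall phi, S phi -> Th phi) ->
  satisfies_S_implication vT vF pref S ->
  (forall S' : form P -> Prop,
     theory vT vF S' ->
     (forall phi, S phi -> S' phi) ->
     (exists phi, S' phi /\ ~ S phi) ->
     (forall phi, S' phi -> Th phi) ->
     ~ satisfies_S_implication vT vF pref S') ->
  forall phi, S phi <-> (Th phi /\ pref (pm phi) (pm (Var vT))).
Proof.
intros HNT HEU HIE HTh HS HSTh HSimp Hmax phi; split.
- intros Sphi; split; [auto|].
  apply HSimp; exists (cons phi nil); split; [intros g [<-|[]]; auto|].
  intros v Hv Hall; apply Hall; right; left; reflexivity.
- intros [Thphi Hp]; destruct (classic (S phi)) as [|Hn]; auto; exfalso.
  pose S' := fun x => exists G, (forall g, List.In g G -> S g) /\ entails vT vF (phi :: G) x.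
  have S'Th : forall x, S' x -> Th x.
    intros x [G [HG Hx]]; apply (proj1 HTh (phi :: G)); auto.
    intros g [<-|Hg]; auto.
  apply (Hmax S').
  + split.
    * intros H psi HH Hent.
      edestruct collect as [G [HG HE]]; [exact HH|].
      exists G; split; auto; eapply entails_cut; [exact HE|exact Hent].
    * intro HF; exact (proj2 HTh (S'Th _ HF)).
  + intros x Sx; exists (cons x nil); split; [intros g [<-|[]]; auto|].
    intros v Hv Hall; apply Hall; right; left; reflexivity.
  + exists phi; split; auto; exists nil; split; [intros g []|].
    intros v Hv Hall; apply Hall; left; reflexivity.
  + exact S'Th.
  + intros chi psi [H [HH Hent]].
    edestruct collect as [G [HG HE]]; [exact HH|].
    have Hk : pref (pm (And chi phi)) (pm chi) := key_ineq chi phi HNT HEU HIE Hp.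
    have Hs : pref (pm psi) (pm (And chi phi)).
      apply HSimp; exists G; split; auto.
      intros v Hv Hall.
      have Ha := Hall _ (or_introl (erefl _)); simpl in Ha; move/andP: Ha => [Hc Hph].
      apply Hent; auto; intros g [<-|Hg]; auto.
      apply (HE g Hg v Hv); intros k [<-|Hk']; auto; apply Hall; right; auto.
    destruct HEU as [_ [Htrans _]].
    apply Htrans with (pm (And chi phi)); try apply is_bet_pm; auto.
Qed.
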